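(* Let $\mathbf x\in\mathcal D^m$ and $\mathbf q_n(t)=\sum_{i:\,t^n_i\le t}(\mathbf{x}(t^n_{i+1})-\mathbf{x}(t^n_i))(\mathbf{x}(t^n_{i+1})-\mathbf{x}(t^n_i))^T$. Then $(\mathbf q_n)$ converges in $(\mathcal D^{m\times m},d)$ if and only if it converges in the product space $(\mathcal D,d)^{m\times m}$ (i.e. each entry converges in $(\mathcal D,d)$).
   Context: Let $\pi=(\pi_n)_{n\ge1}$ be a sequence of partitions $\pi_n=(t^n_0,\dots,t^n_{k_n})$ with $0=t^n_0<\dots<t^n_{k_n}<\infty$, $t^n_{k_n}\uparrow\infty$, and mesh tending to $0$ on compacts; sums over $i$ run over $0\le i<k_n$. $\mathcal{D}$, $\mathcal{D}^m$, $\mathcal{D}^{m\times m}$ denote the spaces of càdlàg functions $[0,\infty)\to\mathbb{R}$, $\mathbb R^m$, $\mathbb{R}^{m\times m}$, each with a metric $d$ inducing its Skorokhod $J_1$ topology. *)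

(* Defs.v *)
From HB Require Import structures.
From mathcomp Require Import all_boot all_order all_algebra.
From mathcomp Require Import all_classical all_reals all_analysis.
Set Implicit Arguments. Unset Strict Implicit. Unset Printing Implicit Defensive.
Import Order.TTheory GRing.Theory Num.Theory.
Import numFieldNormedType.Exports.
Local Open Scope classical_set_scope.
Local Open Scope ring_scope.

(* Functions on [0,oo) are represented as functions R -> V; only their
   restriction to [0,oo) matters in all definitions below. *)

Section Skorokhod.
Variable R : realType.

Definition cadlag (V : normedModType R) (f : R -> V) : Prop :=
  (forall t : R, 0 <= t -> f x @[x --> t^'+] --> f t) /\
  (forall t : R, 0 < t -> cvg (f x @[x --> t^'-])).

Definition time_change (lam : R -> R) : Prop :=
  lam 0 = 0 /\
  (forall s u, 0 <= s -> s < u -> lam s < lam u) /\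
  {within [set s | 0 <= s], continuous lam} /\
  (forall s, 0 <= s -> exists u, 0 <= u /\ lam u = s).

(* Convergence in the Skorokhod J1 topology on D([0,oo), V)
   (Jacod-Shiryaev, Thm VI.1.14 (b)): there are time changes lam_n with
   sup_s |lam_n s - s| -> 0 and, for every N, sup_{s <= N} |u_n (lam_n s) - f s| -> 0. *)
Definition J1_cvg (V : normedModType R) (u : nat -> R -> V) (f : R -> V) : Prop :=
  exists lam : nat -> R -> R,
    (forall n, time_change (lam n)) /\
    (forall e : R, 0 < e -> exists N : nat, forall n, (N <= n)%N ->
        forall s, 0 <= s -> `|lam n s - s| <= e) /\
    (forall T : R, 0 < T -> forall e : R, 0 < e -> exists N : nat,
        forall n, (N <= n)%N -> forall s, 0 <= s -> s <= T ->
          `|u n (lam n s) - f s| <= e).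

Definition D_convergent (V : normedModType R) (u : nat -> R -> V) : Prop :=
  exists f : R -> V, cadlag f /\ J1_cvg u f.

Definition partition_seq (t : nat -> nat -> R) (k : nat -> nat) : Prop :=
  (forall n, t n 0%N = 0) /\
  (forall n i, (i < k n)%N -> t n i < t n i.+1) /\
  (forall n, t n (k n) <= t n.+1 (k n.+1)) /\
  (forall M : R, exists N : nat, forall n, (N <= n)%N -> M < t n (k n)) /\
  (forall T : R, 0 < T -> forall e : R, 0 < e -> exists N : nat,
      forall n, (N <= n)%N -> forall i, (i < k n)%N -> t n i <= T ->
        t n i.+1 - t n i <= e).

Definition qvar (m : nat) (t : nat -> nat -> R) (k : nat -> nat)
  (x : R -> 'cV[R]_m) (n : nat) (s : R) : 'M[R]_(m, m) :=
  \sum_(i < k n | t n i <= s)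
    ((x (t n i.+1) - x (t n i)) *m (x (t n i.+1) - x (t n i))^T).

End Skorokhod.

(* Main.v *)
Require Import Defs.
From HB Require Import structures.
From mathcomp Require Import all_boot all_order all_algebra.
From mathcomp Require Import all_classical all_reals all_analysis.
From mathcomp Require Import ring lra.
Import Order.TTheory GRing.Theory Num.Theory.
Import numFieldNormedType.Exports.
Local Open Scope ring_scope.
Local Open Scope classical_set_scope.
Set Implicit Arguments. Unset Strict Implicit. Unset Printing Implicit Defensive.
Section Aux.
Variable R : realType.

Lemma mx_entry_le (m n : nat) (M : 'M[R]_(m, n)) i j : `|M i j| <= `|M|.
Proof.
rewrite [X in _ <= X]/Num.norm /= mx_normrE.
by apply: (le_bigmax _ (fun ij : 'I_m * 'I_n => `|M ij.1 ij.2|) (i, j)).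
Qed.

Lemma mx_norm_le (m n : nat) (M : 'M[R]_(m, n)) (e : R) :
  0 <= e -> (forall i j, `|M i j| <= e) -> `|M| <= e.
Proof.
move=> e0 H; rewrite [X in X <= _]/Num.norm /= mx_normrE.
apply/bigmax_leP; split => // -[i j] _; exact: H.
Qed.

Lemma cvg_entry (T : Type) (F : set_system T) (FF : Filter F) (m n : nat)
  (f : T -> 'M[R]_(m, n)) (l : 'M[R]_(m, n)) i j :
  f x @[x --> F] --> l -> f x i j @[x --> F] --> l i j.
Proof.
move=> /cvgrPdist_le H; apply/cvgrPdist_le => e e0.
apply: filterS (H e e0) => y Hy; apply: le_trans Hy.
have := mx_entry_le (l - f y) i j; by rewrite !mxE.
Qed.

Lemma cvg_entry_ex (T : Type) (F : set_system T) (FF : ProperFilter F) (m n : nat)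
  (f : T -> 'M[R]_(m, n)) i j :
  cvg (f x @[x --> F]) -> cvg (f x i j @[x --> F]).
Proof.
move=> /cvg_ex [l Hl]; apply/cvg_ex; exists (l i j); exact: cvg_entry.
Qed.

Lemma forward_dir (m : nat) (u : nat -> R -> 'M[R]_(m, m)) :
  D_convergent u -> forall i j, D_convergent (fun n s => u n s i j).
Proof.
move=> [f [[fr fl] [lam [tl [l1 l2]]]]] i j.
exists (fun s => f s i j); split.
  split.
    by move=> t0 t00; apply: cvg_entry; exact: fr.
  move=> t0 t00; apply: cvg_entry_ex; exact: fl.
exists lam; split => //; split => //.
move=> T T0 e e0; have [N HN] := l2 T T0 e e0; exists N => n Nn s s0 sT.
apply: le_trans (HN n Nn s s0 sT).
have := mx_entry_le (u n (lam n s) - f s) i j; by rewrite !mxE.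
Qed.
End Aux.
Section TC.
Variable R : realType.
Variables (a b : nat -> R) (K : nat).
Hypotheses (a0 : a 0%N = 0) (b0 : b 0%N = 0)
  (ainc : forall j, (j < K)%N -> a j < a j.+1)
  (binc : forall j, (j < K)%N -> b j < b j.+1).

Definition clampa j (s : R) := Num.min (Num.max s (a j)) (a j.+1).
Definition slope j := (b j.+1 - b j) / (a j.+1 - a j).
Definition termk j (s : R) := slope j * (clampa j s - a j).
Definition FK n s := \sum_(0 <= j < n) termk j s.
Definition lamk s := FK K s + Num.max (s - a K) 0.

Lemma amono i j : (i <= j <= K)%N -> a i <= a j.
Proof.
move=> /andP[]; elim: j => [|j IH]; first by rewrite leqn0 => /eqP ->.
rewrite leq_eqVlt => /orP[/eqP -> //|]; rewrite ltnS => ij jK.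
apply: le_trans (IH ij (ltnW jK)) _; exact/ltW/ainc.
Qed.

Lemma slope_ge0 j : (j < K)%N -> 0 <= slope j.
Proof.
move=> jK; apply: divr_ge0; rewrite subr_ge0; apply: ltW; [exact: binc|exact: ainc].
Qed.

Lemma clamp_lo j s : (j < K)%N -> s <= a j -> clampa j s = a j.
Proof.
move=> jK sa; rewrite /clampa max_r // min_l //; exact/ltW/ainc.
Qed.

Lemma clamp_mid j s : a j <= s -> s <= a j.+1 -> clampa j s = s.
Proof. by move=> h1 h2; rewrite /clampa max_l // min_l. Qed.

Lemma clamp_hi j s : (j < K)%N -> a j.+1 <= s -> clampa j s = a j.+1.
Proof.
move=> jK sa; rewrite /clampa max_l ?min_r //.
apply: le_trans sa; exact/ltW/ainc.
Qed.

Lemma term_lo j s : (j < K)%N -> s <= a j -> termk j s = 0.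
Proof. by move=> jK sa; rewrite /termk clamp_lo // subrr mulr0. Qed.

Lemma term_hi j s : (j < K)%N -> a j.+1 <= s -> termk j s = b j.+1 - b j.
Proof.
move=> jK sa; rewrite /termk clamp_hi // /slope divfK //.
by rewrite subr_eq0 gt_eqF // ainc.
Qed.

Lemma term_mono j s u : (j < K)%N -> s <= u -> termk j s <= termk j u.
Proof.
move=> jK su; rewrite /termk ler_wpM2l ?slope_ge0 // lerD2r /clampa.
by apply: le_min2 => //; apply: le_max2.
Qed.

Lemma FK_hi n s : (n <= K)%N -> a n <= s -> FK n s = b n.
Proof.
elim: n => [|n IH] nK ans; first by rewrite /FK big_geq.
rewrite /FK big_nat_recr //= -/(FK n s) IH ?term_hi //; first by ring.
- exact: ltnW.
- apply: le_trans ans; exact/ltW/ainc.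
Qed.

Lemma FK_lo n n' s : (n <= n' <= K)%N -> s <= a n -> FK n' s = FK n s.
Proof.
move=> /andP[]; elim: n' => [|n' IH]; first by rewrite leqn0 => /eqP ->.
rewrite leq_eqVlt => /orP[/eqP -> //|]; rewrite ltnS => nn n'K san.
rewrite /FK big_nat_recr //= -/(FK n' s) IH ?term_lo ?addr0 //; last exact: ltnW.
apply: le_trans san _; apply: amono; rewrite nn; exact: ltnW.
Qed.

Lemma FK_knot j : (j <= K)%N -> FK K (a j) = b j.
Proof.
move=> jK; rewrite (@FK_lo j K (a j)); first by rewrite FK_hi.
  by rewrite jK leqnn.
by [].
Qed.

Lemma FK_mono n s u : (n <= K)%N -> s <= u -> FK n s <= FK n u.
Proof.
move=> nK su; rewrite /FK; apply: ler_sum_nat => j /andP[_ jn].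
apply: term_mono => //; exact: leq_trans jn nK.
Qed.

Lemma bmono i j : (i <= j <= K)%N -> b i <= b j.
Proof.
move=> /andP[]; elim: j => [|j IH]; first by rewrite leqn0 => /eqP ->.
rewrite leq_eqVlt => /orP[/eqP -> //|]; rewrite ltnS => ij jK.
apply: le_trans (IH ij (ltnW jK)) _; exact/ltW/binc.
Qed.

Lemma aK_ge0 : 0 <= a K.
Proof. by have := @amono 0 K; rewrite a0; apply; rewrite leqnn. Qed.

Lemma bK_ge0 : 0 <= b K.
Proof. by have := @bmono 0 K; rewrite b0; apply; rewrite leqnn. Qed.

Lemma lamk_knot j : (j <= K)%N -> lamk (a j) = b j.
Proof.
move=> jK; rewrite /lamk FK_knot //.
rewrite max_r ?addr0 //.
rewrite subr_le0; apply: amono; by rewrite jK leqnn.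
Qed.

Lemma lamk0 : lamk 0 = 0.
Proof. by have := lamk_knot (leq0n K); rewrite a0 b0. Qed.

Lemma FK_strict n s u : (n <= K)%N -> 0 <= s -> s < u -> s < a n -> FK n s < FK n u.
Proof.
elim: n => [|n IH] nK s0 su san; first by move: san; rewrite a0 ltNge s0.
rewrite /FK !big_nat_recr //= -!/(FK n _).
have [san'|ans] := ltrP s (a n).
  apply: ltr_leD; first exact: IH (ltnW nK) s0 su san'.
  apply: term_mono => //; exact: ltW.
apply: ler_ltD; first by apply: FK_mono; [exact: ltnW|exact: ltW].
rewrite /termk ltr_pM2l; last first.
  apply: divr_gt0; rewrite subr_gt0; [exact: binc|exact: ainc].
rewrite ltrD2r clamp_mid //; last exact: ltW.
rewrite /clampa max_l; last by apply: le_trans ans _; exact: ltW.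
by rewrite lt_min su san.
Qed.
Lemma lamk_strict s u : 0 <= s -> s < u -> lamk s < lamk u.
Proof.
move=> s0 su; rewrite /lamk; have [saK|aKs] := ltrP s (a K).
  apply: ltr_leD; first exact: FK_strict.
  by apply: le_max2 => //; rewrite lerD2r ltW.
rewrite !FK_hi //; last by apply: le_trans aKs (ltW su).
rewrite ltrD2l !max_l; first by rewrite ltrD2r.
- by rewrite subr_ge0; apply: le_trans aKs (ltW su).
- by rewrite subr_ge0.
Qed.

Lemma FK_dev e n s : (forall j, (j <= K)%N -> `|a j - b j| <= e) ->
  (n <= K)%N -> 0 <= s -> s <= a n -> `|FK n s - s| <= e.
Proof.
move=> He; elim: n s => [|n IH] s nK s0 san.
  have -> : s = 0 by apply/le_anti; rewrite s0 -a0 san.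
  rewrite /FK big_geq // subr0 normr0.
  by apply: le_trans (He 0%N (leq0n K)); rewrite normr_ge0.
have [sa|asn] := lerP s (a n).
  by rewrite (@FK_lo n) ?IH ?(ltnW nK) ?leqnSn.
rewrite /FK big_nat_recr //= -/(FK n s) FK_hi ?(ltnW nK) ?(ltW asn) //.
rewrite /termk clamp_mid ?(ltW asn) //.
have d0 : a n.+1 - a n != 0 by rewrite subr_eq0 gt_eqF // ainc.
set th := (s - a n) / (a n.+1 - a n).
have th0 : 0 <= th by rewrite divr_ge0 // subr_ge0 ltW // ainc.
have th1 : th <= 1.
  rewrite ler_pdivrMr ?mul1r ?lerD2r // subr_gt0 ainc //.
have -> : b n + slope n * (s - a n) - s =
   (1 - th) * (b n - a n) + th * (b n.+1 - a n.+1).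
  rewrite /th /slope; field; exact: d0.
apply: le_trans (ler_normD _ _) _.
rewrite normrM; rewrite normrM (ger0_norm th0) ger0_norm ?subr_ge0 //.
have h1 := He n (ltnW nK); have h2 := He n.+1 nK.
rewrite distrC in h1; rewrite distrC in h2.
have : (1 - th) * `|b n - a n| + th * `|b n.+1 - a n.+1| <= (1 - th) * e + th * e.
  by apply: lerD; apply: ler_wpM2l => //; rewrite subr_ge0.
by move=> /le_trans; apply; rewrite -mulrDl subrK mul1r.
Qed.

Lemma lamk_dev e s : (forall j, (j <= K)%N -> `|a j - b j| <= e) ->
  0 <= s -> `|lamk s - s| <= e.
Proof.
move=> He s0; rewrite /lamk; case: (boolP (s <= a K)) => [saK|]; last rewrite -ltNge => aKs.
  rewrite max_r ?addr0; last by rewrite subr_le0.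
  exact: FK_dev.
rewrite FK_hi ?(ltW aKs) // max_l; last by rewrite subr_ge0 ltW.
have -> : b K + (s - a K) - s = - (a K - b K) by ring.
by rewrite normrN He.
Qed.

Lemma termk_cont j : continuous (termk j).
Proof.
move=> s; rewrite /termk.
apply: (@continuousM _ _ (fun=> slope j) (fun s => clampa j s - a j)).
  exact: cst_continuous.
apply: (@continuousB _ _ _ (clampa j) (fun=> a j)); last exact: cst_continuous.
rewrite /clampa.
apply: (@min_fun_continuous _ _ _ (fun s => Num.max s (a j)) (fun=> a j.+1)); last exact: cst_continuous.
apply: (@max_fun_continuous _ _ _ id (fun=> a j)); last exact: cst_continuous.
by move=> ?.
Qed.

Lemma FK_cont n : continuous (FK n).
Proof.
elim: n => [|n IH] s.
  have -> : FK 0 = fun=> 0 by apply/funext => u; rewrite /FK big_geq.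
  exact: cst_continuous.
have -> : FK n.+1 = (FK n + termk n)%R.
  by apply/funext => u; rewrite /FK big_nat_recr.
apply: continuousD; [exact: IH | exact: termk_cont].
Qed.

Lemma lamk_cont : continuous lamk.
Proof.
move=> s; have -> : lamk = (FK K + (fun s => Num.max (s - a K) 0))%R by [].
apply: continuousD; first exact: FK_cont.
apply: (@max_fun_continuous _ _ _ (fun s => s - a K) (fun=> 0)); last exact: cst_continuous.
move=> u; apply: (@continuousB _ _ _ id (fun=> a K)); last exact: cst_continuous.
by move=> ?.
Qed.

Lemma lamk_tc : time_change lamk.
Proof.
split; first exact: lamk0.
split; first by move=> s u s0 su; exact: lamk_strict.
split; first exact: continuous_subspaceT lamk_cont.
move=> y y0.
have s0 : 0 <= y + a K by rewrite addr_ge0 // aK_ge0.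
have ly : lamk (y + a K) = b K + y.
  rewrite /lamk FK_hi ?lerDr // addrK max_l //.
have := @IVT R lamk 0 (y + a K) y s0 (continuous_subspaceT lamk_cont).
rewrite lamk0 ly min_l ?max_r; last 2 first.
- by rewrite addr_ge0 // bK_ge0.
- by rewrite addr_ge0 // bK_ge0.
case; first by rewrite y0 lerDr bK_ge0.
move=> c; rewrite in_itv /= => /andP[c0 _] hc; by exists c.
Qed.
End TC.
Section X. Variable R : realType.
Lemma right_ball (V : normedModType R) (g : R -> V) u e : g x @[x --> u^'+] --> g u -> 0 < e ->
  exists2 d, 0 < d & forall w, `|u - w| < d -> u <= w -> `|g u - g w| <= e.
Proof.
move=> /cvgrPdist_le /(_ e) H e0; have := H e0.
rewrite /within /= => /nbhs_ballP [d d0 Hd]; exists d => // w uw.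
rewrite le_eqVlt => /orP[/eqP <-|uw']; first by rewrite subrr normr0 ltW.
apply: Hd => //; by rewrite /ball /=.
Qed.
Lemma left_ball (V : normedModType R) (g : R -> V) u L e : g x @[x --> u^'-] --> L -> 0 < e ->
  exists2 d, 0 < d & forall w, `|u - w| < d -> w < u -> `|L - g w| <= e.
Proof.
move=> /cvgrPdist_le /(_ e) H e0; have := H e0.
rewrite /within /= => /nbhs_ballP [d d0 Hd]; by exists d.
Qed.


Definition leftlim (f : R -> R) u := lim (f x @[x --> u^'-]).
Definition jmp (f : R -> R) u := f u - leftlim f u.

Lemma sigma_lemma (g : R -> R) (hg : cadlag g) (sg : nat -> R -> R)
  (s_pos : forall n s, 0 <= s -> 0 <= sg n s)
  (s_inc : forall n s u, 0 <= s -> s < u -> sg n s < sg n u)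
  (s_id : forall e, 0 < e -> \forall n \near \oo, forall s, 0 <= s -> `|sg n s - s| < e)
  (s_fix : forall u, 0 < u -> jmp g u != 0 -> \forall n \near \oo, sg n u = u)
  (T e : R) : 0 < e ->
  \forall n \near \oo, forall s, 0 <= s -> s <= T -> `|g (sg n s) - g s| <= e.
Proof.
move=> e0.
have cpt := @segment_compact R 0 T.
have := (compact_near_coveringP _).1 cpt nat \oo
  (fun n s => 0 <= s -> `|g (sg n s) - g s| <= e) (eventually_filter : Filter \oo).
move=> H.
suff: \forall n \near \oo, `[0, T] `<=` (fun s => 0 <= s -> `|g (sg n s) - g s| <= e).
  apply: filterS => n Hn s s0 sT; apply: Hn => //.
  by rewrite /= in_itv /= s0 sT.
apply: H => u; rewrite /= in_itv /= => /andP[u0 uT].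
have e20 : 0 < e / 2 by rewrite divr_gt0.
have [d1 d10 H1] := right_ball (hg.1 u u0) e20.
have [d2 d20 H2] : exists2 d2, 0 < d2 & forall w, `|u - w| < d2 -> 0 <= w -> w < u ->
    `|leftlim g u - g w| <= e / 2.
  case: (boolP (0 < u)) => [up|].
    have [d2 d20 H2] := left_ball (hg.2 u up) e20.
    by exists d2 => // w uw _ wu; apply: H2.
  by rewrite -leNgt => un; exists 1 => // w _ w0 wu; move: (le_lt_trans w0 wu); rewrite ltNge un.
pose d := Num.min d1 d2 / 2.
have d0 : 0 < d by rewrite divr_gt0 // lt_min d10 d20.
have dd1 : d * 2 <= d1 by rewrite /d divfK ?ge_min ?lexx // pnatr_eq0.
have dd2 : d * 2 <= d2 by rewrite /d divfK ?ge_min ?lexx ?orbT // pnatr_eq0.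
exists (ball u d, [set n | (forall s, 0 <= s -> `|sg n s - s| < d) /\
   (0 < u -> jmp g u != 0 -> sg n u = u)]).
  split; first exact: nbhsx_ballx.
  apply: filterI; first exact: s_id.
  have [[up J]|nJ] := pselect (0 < u /\ jmp g u != 0).
    by apply: filterS (s_fix u up J) => n -> .
  by near=> n => up J; exfalso; apply: nJ.
move=> [s n] [/= us [Hn1 Hn2]] s0.
set w := sg n s.
have w0 : 0 <= w by exact: s_pos.
have uw : `|u - w| < d * 2.
  have -> : u - w = (u - s) + (s - w) by ring.
  apply: le_lt_trans (ler_normD _ _) _.
  rewrite mulr_natr mulr2n; apply: ltrD; first by move: us; rewrite /ball /=.
  by rewrite distrC; apply: Hn1.
have us2 : `|u - s| < d * 2.
  apply: lt_le_trans us _; rewrite ler_pMr // ler1n //.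
have tri : forall c, `|c - g w| <= e / 2 -> `|c - g s| <= e / 2 -> `|g w - g s| <= e.
  move=> c h1 h2; have -> : g w - g s = (c - g s) - (c - g w) by ring.
  apply: le_trans (ler_normB _ _) _; rewrite (splitr e); apply: lerD => //.
have [su|us'] := boolP (s < u); last rewrite -leNgt in us'.
- have [wu|uw'] := boolP (w < u); last rewrite -leNgt in uw'.
  + apply: (tri (leftlim g u)).
    * apply: H2 => //; exact: lt_le_trans uw dd2.
    * apply: H2 => //; exact: lt_le_trans us2 dd2.
  + have [J|J] := eqVneq (jmp g u) 0.
    * have LL : leftlim g u = g u by apply/eqP; rewrite eq_sym -subr_eq0 -/(jmp g u) J.
      apply: (tri (g u)).
      - apply: H1 => //; exact: lt_le_trans uw dd1.
      - rewrite -LL; apply: H2 => //; exact: lt_le_trans us2 dd2.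
    * exfalso; have up : 0 < u by exact: le_lt_trans s0 su.
      have := s_inc n s u s0 su; rewrite (Hn2 up J) => /(le_lt_trans uw'); by rewrite ltxx.
- have [wu|uw'] := boolP (w < u); last rewrite -leNgt in uw'.
  + have up : 0 < u by exact: le_lt_trans w0 wu.
    have [J|J] := eqVneq (jmp g u) 0.
    * have LL : leftlim g u = g u by apply/eqP; rewrite eq_sym -subr_eq0 -/(jmp g u) J.
      apply: (tri (leftlim g u)).
      - apply: H2 => //; exact: lt_le_trans uw dd2.
      - rewrite LL; apply: H1 => //; exact: lt_le_trans us2 dd1.
    * exfalso; have : u <= w.
        have [us''|us''] := eqVneq u s.
          by rewrite /w -us'' (Hn2 up J).
        have {us''}us'' : u < s by rewrite lt_neqAle us'' us'.
        by rewrite -{1}(Hn2 up J); apply/ltW/s_inc => //; exact: ltW.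
      by rewrite leNgt wu.
  + apply: (tri (g u)).
    * apply: H1 => //; exact: lt_le_trans uw dd1.
    * apply: H1 => //; exact: lt_le_trans us2 dd1.
Unshelve. all: by end_near.
Qed.
Lemma exN_near (P : nat -> Prop) : (exists N, forall n, (N <= n)%N -> P n) -> \forall n \near \oo, P n.
Proof. move=> [N HN]; exists N => // n /= Nn; exact: HN. Qed.
Lemma near_exN (P : nat -> Prop) : (\forall n \near \oo, P n) -> exists N, forall n, (N <= n)%N -> P n.
Proof. move=> [N _ HN]; exists N => n Nn; exact: HN. Qed.

Lemma tc_ge0 (l : R -> R) : time_change l -> forall s, 0 <= s -> 0 <= l s.
Proof.
move=> [l0 [li _]] s; rewrite le_eqVlt => /orP[/eqP <-|s0]; first by rewrite l0.
by rewrite -l0; apply/ltW/li.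
Qed.

Lemma tc_le (l : R -> R) : time_change l -> forall s u, 0 <= s -> s <= u -> l s <= l u.
Proof.
move=> [l0 [li _]] s u s0; rewrite le_eqVlt => /orP[/eqP <-//|su].
exact/ltW/li.
Qed.

Lemma tc_inj (l : R -> R) : time_change l -> forall s u, 0 <= s -> 0 <= u -> l s = l u -> s = u.
Proof.
move=> [l0 [li _]] s u s0 u0 E.
have [su|us|//] := ltgtP s u.
- by have := li s u s0 su; rewrite E ltxx.
- by have := li u s u0 us; rewrite E ltxx.
Qed.

Lemma entry_lemma (v : nat -> R -> R) (g : R -> R) (hg : cadlag g)
  (mu lam : nat -> R -> R)
  (hmu : forall n, time_change (mu n))
  (hmu1 : forall e : R, 0 < e -> exists N : nat, forall n, (N <= n)%N ->
        forall s, 0 <= s -> `|mu n s - s| <= e)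
  (hmu2 : forall T : R, 0 < T -> forall e : R, 0 < e -> exists N : nat,
        forall n, (N <= n)%N -> forall s, 0 <= s -> s <= T ->
          `|v n (mu n s) - g s| <= e)
  (hlam : forall n, time_change (lam n))
  (hlam1 : forall e : R, 0 < e -> exists N : nat, forall n, (N <= n)%N ->
        forall s, 0 <= s -> `|lam n s - s| <= e)
  (align : forall u, 0 < u -> jmp g u != 0 -> \forall n \near \oo, lam n u = mu n u) :
  forall T : R, 0 < T -> forall e : R, 0 < e -> exists N : nat,
        forall n, (N <= n)%N -> forall s, 0 <= s -> s <= T ->
          `|v n (lam n s) - g s| <= e.
Proof.
have [inv Hinv] : exists inv : nat -> R -> R, forall n y, 0 <= y -> 0 <= inv n y /\ mu n (inv n y) = y.
  have := @choice (nat * R) R (fun ny u => 0 <= ny.2 -> 0 <= u /\ mu ny.1 u = ny.2).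
  case.
    move=> [n y] /=; case: (boolP (0 <= y)) => [y0|y0].
      have [u [u0 hu]] := (hmu n).2.2.2 y y0; by exists u.
    by exists 0.
  move=> f Hf; exists (fun n y => f (n, y)) => n y; exact: (Hf (n, y)).
pose sg n s := inv n (lam n s).
have lam0 : forall n s, 0 <= s -> 0 <= lam n s by move=> n s; apply: tc_ge0.
have sg0 : forall n s, 0 <= s -> 0 <= sg n s by move=> n s s0; case: (Hinv n _ (lam0 n s s0)).
have musg : forall n s, 0 <= s -> mu n (sg n s) = lam n s.
  by move=> n s s0; case: (Hinv n _ (lam0 n s s0)).
have sg_inc : forall n s u, 0 <= s -> s < u -> sg n s < sg n u.
  move=> n s u s0 su; have u0 : 0 <= u by apply: le_trans s0 (ltW su).
  rewrite ltNge; apply/negP => H.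
  have := tc_le (hmu n) (sg0 n u u0) H; rewrite !musg // => H'.
  have := (hlam n).2.1 s u s0 su; by rewrite ltNge H'.
have sg_id : forall e, 0 < e -> \forall n \near \oo, forall s, 0 <= s -> `|sg n s - s| < e.
  move=> e e0; have e30 : 0 < e / 3 by rewrite divr_gt0.
  have [N1 H1] := hmu1 _ e30; have [N2 H2] := hlam1 _ e30.
  apply: exN_near; exists (maxn N1 N2) => n; rewrite geq_max => /andP[n1 n2] s s0.
  have -> : sg n s - s = - (mu n (sg n s) - sg n s) + (lam n s - s) by rewrite musg //; ring.
  apply: le_lt_trans (ler_normD _ _) _; rewrite normrN.
  apply: (@le_lt_trans _ _ (e / 3 + e / 3)); first by apply: lerD; [apply: H1 => //; exact: sg0| exact: H2].
  lra.
have sg_fix : forall u, 0 < u -> jmp g u != 0 -> \forall n \near \oo, sg n u = u.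
  move=> u u0 J; apply: filterS (align u u0 J) => n E.
  apply: (tc_inj (hmu n)); [apply: sg0; exact: ltW | exact: ltW | by rewrite musg ?E // ltW].
move=> T T0 e e0; have e20 : 0 < e / 2 by rewrite divr_gt0.
have S := sigma_lemma hg sg0 sg_inc sg_id sg_fix T e20.
have [N1 H1] := hmu2 (T + 1) (ltr_wpDr ler01 T0) _ e20.
apply: near_exN; near=> n.
have Hs1 : forall s, 0 <= s -> `|sg n s - s| < 1.
  by near: n; apply: sg_id; exact: ltr01.
have HS : forall s, 0 <= s -> s <= T -> `|g (sg n s) - g s| <= e / 2 by near: n; exact: S.
have HN : (N1 <= n)%N by near: n; exists N1.
move=> s s0 sT; rewrite -musg //.
have -> : v n (mu n (sg n s)) - g s = (v n (mu n (sg n s)) - g (sg n s)) + (g (sg n s) - g s) by ring.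
apply: le_trans (ler_normD _ _) _; rewrite (splitr e); apply: lerD; last exact: HS.
apply: H1 => //; first exact: sg0.
have : sg n s - s < 1 by apply: le_lt_trans (Hs1 s s0); exact: ler_norm.
lra.
Unshelve. all: by end_near.
Qed.
End X.
Section Gen2.
Variable R : realType.

Lemma lim_ball_le (V : normedModType R) (T : Type) (F : set_system T) (FF : ProperFilter F)
  (f : T -> V) (l c : V) (eta : R) :
  f x @[x --> F] --> l -> (\forall y \near F, `|c - f y| <= eta) -> `|c - l| <= eta.
Proof.
move=> /cvgrPdist_le Hl Hc; apply/ler_addgt0Pr => e e0.
have [y [Hy1 Hy2]] := filter_ex (filterI Hc (Hl e e0)).
have -> : c - l = (c - f y) - (l - f y) by rewrite opprB addrA subrK.
apply: le_trans (ler_normB _ _) _; exact: lerD.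
Qed.

Lemma mx_cvg_entries (T : Type) (F : set_system T) (FF : Filter F) (m n : nat)
  (h : T -> 'M[R]_(m, n)) (l : 'M[R]_(m, n)) :
  (forall i j, h x i j @[x --> F] --> l i j) -> h x @[x --> F] --> l.
Proof.
move=> H; apply/cvgrPdist_le => e e0.
have : \forall y \near F, forall ij : 'I_m * 'I_n, `|l ij.1 ij.2 - h y ij.1 ij.2| <= e.
  apply: filter_forall => -[i j]; have /cvgrPdist_le := H i j; by apply.
apply: filterS => y Hy; apply: mx_norm_le; first exact: ltW.
move=> i j; rewrite !mxE; exact: (Hy (i, j)).
Qed.

Lemma near_ex (P : nat -> Prop) : (\forall n \near \oo, P n) -> exists n, P n.
Proof. by move=> H; apply: filter_ex H. Qed.

End Gen2.
Lemma tri_eq (V : zmodType) (a b c : V) : c - b = (a - b) - (a - c).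
Proof. by rewrite opprB [RHS]addrC [RHS]addrA subrK. Qed.
Lemma tri_eq3 (V : zmodType) (a b c l : V) : c - b - (a - l) = (l - b) - (a - c).
Proof. by rewrite !opprB addrACA [RHS]addrACA (addrC l). Qed.

Section Main.
Variables (R : realType) (m : nat) (t : nat -> nat -> R) (k : nat -> nat).
Hypothesis hpi : partition_seq t k.
Variable x : R -> 'cV[R]_m.
Hypothesis hx : cadlag x.

Definition Dx n j : 'cV[R]_m := x (t n j.+1) - x (t n j).
Definition dd (a b : 'I_m) n j := Dx n j a 0 * Dx n j b 0.
Definition qe (a b : 'I_m) n s := qvar t k x n s a b.

Lemma qeE a b n s : qe a b n s = \sum_(i < k n | t n i <= s) dd a b n i.
Proof.
rewrite /qe /qvar summxE; apply: eq_bigr => i _.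
by rewrite !mxE big_ord1 !mxE /dd /Dx !mxE.
Qed.

Lemma t0 n : t n 0%N = 0. Proof. by case: hpi. Qed.
Lemma t_inc n i : (i < k n)%N -> t n i < t n i.+1.
Proof. by case: hpi => _ [H _]; apply: H. Qed.

Lemma t_lt n i j : (i < j <= k n)%N -> t n i < t n j.
Proof.
move=> /andP[]; elim: j => [//|j IH].
rewrite ltnS leq_eqVlt => /orP[/eqP -> jk|ij jk]; first exact: t_inc.
apply: lt_trans (IH ij (ltnW jk)) _; exact: t_inc.
Qed.

Lemma t_le n i j : (i <= j <= k n)%N -> t n i <= t n j.
Proof.
move=> /andP[]; rewrite leq_eqVlt => /orP[/eqP -> //|ij jk].
apply/ltW/t_lt; by rewrite ij jk.
Qed.

Lemma t_ge0 n i : (i <= k n)%N -> 0 <= t n i.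
Proof. by move=> ik; rewrite -(t0 n); apply: t_le; rewrite leq0n ik. Qed.

Lemma findj n u : 0 < u -> u <= t n (k n) ->
  exists j, [/\ (j < k n)%N, t n j < u & u <= t n j.+1].
Proof.
move=> u0; suff : forall K, (K <= k n)%N -> u <= t n K ->
    exists j, [/\ (j < K)%N, t n j < u & u <= t n j.+1].
  move=> H /(H _ (leqnn _)) [j [jk h1 h2]]; by exists j.
elim => [|K IH] Kk uK; first by move: uK; rewrite t0 leNgt u0.
case: (boolP (u <= t n K)) => [uK'|]; last rewrite -ltNge => Ku.
  have [j [jK h1 h2]] := IH (ltnW Kk) uK'; exists j; split => //; exact: ltnW.
by exists K; split.
Qed.

Lemma uniqj n u j j' : (j < k n)%N -> (j' < k n)%N ->
  t n j < u -> u <= t n j.+1 -> t n j' < u -> u <= t n j'.+1 -> j = j'.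
Proof.
move=> jk j'k h1 h2 h3 h4; apply/eqP; rewrite eqn_leq; apply/andP; split.
  rewrite leqNgt; apply/negP => jj.
  have : t n j'.+1 <= t n j by apply: t_le; rewrite jj ltnW.
  move=> H; have := lt_le_trans h1 (le_trans h4 H); by rewrite ltxx.
rewrite leqNgt; apply/negP => jj.
have : t n j.+1 <= t n j' by apply: t_le; rewrite jj ltnW.
move=> H; have := lt_le_trans h3 (le_trans h2 H); by rewrite ltxx.
Qed.


Definition xL u := lim (x y @[y --> u^'-]).
Definition jx u := x u - xL u.

Lemma xballs u eta : 0 < u -> 0 < eta -> exists2 d, 0 < d &
  (forall w, `|u - w| < d -> u <= w -> `|x u - x w| <= eta) /\
  (forall w, `|u - w| < d -> w < u -> `|xL u - x w| <= eta).
Proof.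
move=> u0 e0.
have [d1 d10 H1] := right_ball (hx.1 u (ltW u0)) e0.
have [d2 d20 H2] := left_ball (hx.2 u u0) e0.
exists (Num.min d1 d2); first by rewrite lt_min d10 d20.
split => w uw; [apply: H1 | apply: H2]; apply: lt_le_trans uw _; by rewrite ge_min lexx ?orbT.
Qed.

Lemma intv u eta : 0 < u -> 0 < eta -> exists2 d, 0 < d &
  forall v w, `|u - v| < d -> `|u - w| < d ->
  [/\ (u <= v -> u <= w -> `|x w - x v| <= eta + eta),
      (v < u -> w < u -> `|x w - x v| <= eta + eta) &
      (v < u -> u <= w -> `|x w - x v - jx u| <= eta + eta)].
Proof.
move=> u0 e0; have [d d0 [H1 H2]] := xballs u0 e0; exists d => // v w uv uw; split.
- move=> uv' uw'; rewrite (tri_eq (x u)).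
  apply: le_trans (ler_normB _ _) _; apply: lerD; [exact: H1|exact: H1].
- move=> vu wu; rewrite (tri_eq (xL u)).
  apply: le_trans (ler_normB _ _) _; apply: lerD; [exact: H2|exact: H2].
- move=> vu uw'; rewrite /jx tri_eq3.
  apply: le_trans (ler_normB _ _) _; apply: lerD; [exact: H2|exact: H1].
Qed.

Lemma jsmall u eta : 0 < u -> 0 < eta -> exists2 d, 0 < d &
  forall w, `|u - w| < d -> w != u -> 0 < w -> `|jx w| <= eta + eta.
Proof.
move=> u0 e0; have [d d0 [H1 H2]] := xballs u0 e0; exists d => // w uw wu w0.
have Lw : x y @[y --> w^'-] --> xL w by exact: (hx.2 w w0).
have [wlu|ulw|ewu] := ltgtP w u; last by move: wu; rewrite ewu eqxx.
- have Hb : `|xL u - xL w| <= eta.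
    apply: (lim_ball_le _ Lw).
    rewrite /within /=; apply/nbhs_ballP.
    exists (d - `|u - w|); first by rewrite /= subr_gt0.
    move=> y; rewrite /ball /= => wy yw; apply: H2; last exact: lt_trans yw wlu.
    have -> : u - y = (u - w) + (w - y) by rewrite addrA subrK.
    apply: le_lt_trans (ler_normD _ _) _; by rewrite -ltrBrDl.
  rewrite /jx (tri_eq (xL u)).
  apply: le_trans (ler_normB _ _) _; apply: lerD => //; exact: H2.
- have Hb : `|x u - xL w| <= eta.
    apply: (lim_ball_le _ Lw).
    rewrite /within /=; apply/nbhs_ballP.
    exists (Num.min (d - `|u - w|) (w - u)); first by rewrite /= lt_min !subr_gt0 uw ulw.
    move=> y; rewrite /ball /= lt_min => /andP[wy1 wy2] yw; apply: H1.
      have -> : u - y = (u - w) + (w - y) by rewrite addrA subrK.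
      apply: le_lt_trans (ler_normD _ _) _; by rewrite -ltrBrDl.
    have : w - y < w - u by apply: le_lt_trans wy2; exact: ler_norm.
    rewrite ltrD2l ltrN2 => /ltW //.
  rewrite /jx (tri_eq (x u)).
  apply: le_trans (ler_normB _ _) _; apply: lerD => //; apply: H1 => //; exact: ltW.
Qed.


Lemma t_inj n i j : (i <= k n)%N -> (j <= k n)%N -> t n i = t n j -> i = j.
Proof.
move=> ik jk E; have [ij|ji|//] := ltngtP i j.
- by have := t_lt (i:=i) (j:=j) (n:=n); rewrite ij jk E ltxx => /(_ isT).
- by have := t_lt (i:=j) (j:=i) (n:=n); rewrite ji ik E ltxx => /(_ isT).
Qed.

Lemma dd_le a b n j : `|dd a b n j| <= `|Dx n j| * `|Dx n j|.
Proof. by rewrite /dd normrM; apply: ler_pM => //; apply: mx_entry_le. Qed.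

Lemma mesh_near T e : 0 < T -> 0 < e -> \forall n \near \oo,
  forall i, (i < k n)%N -> t n i <= T -> t n i.+1 - t n i <= e.
Proof.
move=> T0 e0; case: hpi => _ [_ [_ [_ H]]]; apply: exN_near; exact: H.
Qed.

Lemma end_near M : \forall n \near \oo, M < t n (k n).
Proof. case: hpi => _ [_ [_ [H _]]]; apply: exN_near; exact: H. Qed.

End Main.
Section Align.
Variables (R : realType) (m : nat) (t : nat -> nat -> R) (k : nat -> nat).
Hypothesis hpi : partition_seq t k.
Variable x : R -> 'cV[R]_m.
Hypothesis hx : cadlag x.

Lemma align_mu (a b : 'I_m) (g : R -> R) (hg : cadlag g) (mu : nat -> R -> R)
  (hmu : forall n, time_change (mu n))
  (hmu1 : forall e : R, 0 < e -> exists N : nat, forall n, (N <= n)%N ->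
        forall s, 0 <= s -> `|mu n s - s| <= e)
  (hmu2 : forall T : R, 0 < T -> forall e : R, 0 < e -> exists N : nat,
        forall n, (N <= n)%N -> forall s, 0 <= s -> s <= T ->
          `|qe t k x a b n (mu n s) - g s| <= e)
  u (u0 : 0 < u) (J : jmp g u != 0) :
  \forall n \near \oo, exists j, [/\ (j < k n)%N, mu n u = t n j, t n j < u,
     u <= t n j.+1 & `|jmp g u| / 4 <= `|dd t x a b n j|].
Proof.
set e := `|jmp g u| / 4.
have e0 : 0 < e by rewrite divr_gt0 // normr_gt0.
have HL : g y @[y --> u^'-] --> leftlim g u := hg.2 u u0.
have [d1 d10 Hg] := left_ball HL e0.
set c := Num.min 1 e.
have c0 : 0 < c by rewrite lt_min ltr01 e0.
have c1 : c <= 1 by rewrite ge_min lexx.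
have ce : c <= e by rewrite ge_min lexx orbT.
pose eta := c / 4.
have eta0 : 0 < eta by rewrite divr_gt0.
have etae : (eta + eta) * (eta + eta) < e.
  rewrite /eta; apply: lt_le_trans ce; nra.
have [dx dx0 Hx] := intv hx u0 eta0.
pose del := Num.min (Num.min d1 dx) (Num.min u 1) / 4.
have del0 : 0 < del by rewrite divr_gt0 // !lt_min d10 dx0 u0 ltr01.
have hdel : [/\ del * 4 <= d1, del * 4 <= dx, del * 4 <= u & del * 4 <= 1].
  rewrite /del divfK ?pnatr_eq0 //; split; by rewrite !ge_min ?lexx ?orbT.
case: hdel => hd1 hdx hdu hd1'.
have [N1 HN1] := hmu2 u u0 e e0.
have [N2 HN2] := hmu1 del del0.
have HM := mesh_near hpi (ltr_wpDr ler01 u0) del0.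
near=> n.
have E1 : forall s, 0 <= s -> s <= u -> `|qe t k x a b n (mu n s) - g s| <= e.
  by apply: HN1; near: n; exists N1.
have E2 : forall s, 0 <= s -> `|mu n s - s| <= del.
  by apply: HN2; near: n; exists N2.
have E3 : forall i, (i < k n)%N -> t n i <= u + 1 -> t n i.+1 - t n i <= del.
  by near: n; exact: HM.
have [mu0 [muinc [_ musurj]]] := hmu n.
set v0 := mu n u.
have v00 : 0 < v0 by rewrite /v0 -mu0; apply: muinc.
set s1 := u - del.
have s10 : 0 < s1 by rewrite /s1 subr_gt0; apply: lt_le_trans hdu; rewrite ltr_pMr // ltr1n.
set y0 := mu n s1.
have y0v : y0 < v0 by apply: muinc; [exact: ltW | rewrite /s1 ltrBlDr ltrDl].
set M := \big[Num.max/0]_(i < k n | t n i < v0) t n i.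
have Mv : M < v0 by apply/bigmax_ltP; split.
set mx := Num.max M y0.
have Mmx : M <= mx by rewrite /mx le_max lexx.
have y0mx : y0 <= mx by rewrite /mx le_max lexx orbT.
have mxv : mx < v0 by rewrite /mx gt_max Mv y0v.
set y := (mx + v0) / 2.
have My : M < y by rewrite /y; lra.
have y0y : y0 < y by rewrite /y; lra.
have yv : y < v0 by rewrite /y; lra.
have y00 : 0 <= y by apply: le_trans (ltW y0y); rewrite /y0 -mu0; apply/ltW/muinc.
have [s [s0 mus]] := musurj y y00.
have su : s < u.
  rewrite ltNge; apply/negP => us; move: yv; rewrite -mus /v0.
  move: us; rewrite le_eqVlt => /orP[/eqP ->|us]; first by rewrite ltxx.
  by move=> /(lt_trans (muinc _ _ (ltW u0) us)); rewrite ltxx.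
have s1s : s1 < s.
  rewrite ltNge; apply/negP => ss1; move: y0y; rewrite -mus /y0.
  move: ss1; rewrite le_eqVlt => /orP[/eqP ->|ss1]; first by rewrite ltxx.
  by move=> /(lt_trans (muinc _ _ s0 ss1)); rewrite ltxx.
have Hgs : `|leftlim g u - g s| <= e.
  apply: Hg => //; rewrite gtr0_norm ?subr_gt0 //.
  apply: lt_le_trans hd1; move: s1s; rewrite /s1; nra.
have HA := E1 u (ltW u0) (lexx u).
have HB := E1 s s0 (ltW su).
rewrite -/v0 in HA; rewrite mus in HB.
set A := qe t k x a b n v0 in HA *.
set Bv := qe t k x a b n y in HB *.
have AB : e <= `|A - Bv|.
  have : `|jmp g u| <= `|A - Bv| + e + e + e.
    have -> : jmp g u = (A - Bv) - (A - g u) + (Bv - g s) + (g s - leftlim g u).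
      by rewrite /jmp; ring.
    apply: le_trans (ler_normD _ _) _; apply: lerD; last by rewrite distrC.
    apply: le_trans (ler_normD _ _) _; apply: lerD => //.
    apply: le_trans (ler_normB _ _) _; exact: lerD.
  have -> : `|jmp g u| = e * 4 by rewrite /e divfK ?pnatr_eq0.
  lra.
have ABsum : A - Bv = \sum_(i < k n | (t n i <= v0) && (y < t n i)) dd t x a b n i.
  rewrite /A /Bv !qeE (bigID (fun i : 'I_(k n) => t n i <= y) (fun i : 'I_(k n) => t n i <= v0)) /=.
  have -> : \sum_(i < k n | (t n i <= v0) && (t n i <= y)) dd t x a b n i =
            \sum_(i < k n | t n i <= y) dd t x a b n i.
    apply: eq_bigl => i; apply/idP/idP; first by case/andP.
    by move=> h; rewrite h andbT (le_trans h) // ltW.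
  rewrite addrC addrK; apply: eq_bigl => i; by rewrite -ltNge.
have [i [ik ti]] : exists i, (i < k n)%N /\ t n i = v0.
  apply/not_existsP => Hne; move: AB; rewrite ABsum big_pred0 ?normr0; first by rewrite leNgt e0.
  move=> j /=; apply/negP => /andP[h1 h2]; apply: (Hne j); split => //.
  apply/eqP; rewrite eq_le h1 /=; rewrite leNgt; apply/negP => tv.
  have : t n j <= M by rewrite /M; apply: le_bigmax_cond; exact: tv.
  by move=> /le_lt_trans /(_ My); rewrite ltNge (ltW h2).
have ABi : A - Bv = dd t x a b n i.
  rewrite ABsum (big_pred1 (Ordinal ik)) // => j /=.
  apply/idP/idP.
    move=> /andP[h1 h2]; apply/eqP; apply: val_inj => /=; apply: (t_inj hpi) => //.
      exact: ltnW.
    exact: ltnW.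
    rewrite ti; apply/eqP; rewrite eq_le h1 /= leNgt; apply/negP => tv.
    have : t n j <= M by rewrite /M; apply: le_bigmax_cond; exact: tv.
    by move=> /le_lt_trans /(_ My); rewrite ltNge (ltW h2).
  by move=> /eqP ->; rewrite /= ti lexx yv.
rewrite ABi in AB.
have Ev := E2 u (ltW u0); rewrite -/v0 -ti in Ev.
move: Ev; rewrite ler_norml => /andP[Ev1 Ev2].
have tiu1 : t n i <= u + 1 by lra.
have Emesh := E3 i ik tiu1.
have tinc := t_inc hpi ik.
have key : `|Dx t x n i| <= eta + eta -> False.
  move=> H; have h1 := le_trans AB (dd_le t x a b n i).
  have h2 : `|Dx t x n i| * `|Dx t x n i| <= (eta + eta) * (eta + eta).
    by apply: ler_pM => //; exact: normr_ge0.
  lra.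
have hdxv : forall v, `|u - v| <= del + del -> `|u - v| < dx.
  move=> v h; apply: le_lt_trans h _; lra.
have a1 : `|u - t n i| < dx.
  apply: hdxv; rewrite ler_norml; apply/andP; split; lra.
have a2 : `|u - t n i.+1| < dx.
  apply: hdxv; rewrite ler_norml; apply/andP; split; lra.
have [h1 h2 _] := Hx (t n i) (t n i.+1) a1 a2.
exists i; split => //.
- rewrite ltNge; apply/negP => ut; apply: key.
  by apply: h1 => //; apply: le_trans ut (ltW tinc).
- rewrite leNgt; apply/negP => tu; apply: key.
  by apply: h2 => //; apply: lt_trans tinc tu.
Unshelve. all: by end_near.
Qed.
End Align.
Section Delta.
Variables (R : realType) (t : nat -> nat -> R) (k : nat -> nat).
Hypothesis hpi : partition_seq t k.

Definition meshn n (T : R) := \big[Num.max/0]_(i < k n | t n i <= T) (t n i.+1 - t n i).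

Lemma meshn_ge n T i : (i < k n)%N -> t n i <= T -> t n i.+1 - t n i <= meshn n T.
Proof.
move=> ik tT; rewrite /meshn.
exact: (le_bigmax_cond _ (P := fun j : 'I_(k n) => t n j <= T) (fun j : 'I_(k n) => t n j.+1 - t n j) (j := Ordinal ik)).
Qed.

Lemma meshn_mono n T T' : T <= T' -> meshn n T <= meshn n T'.
Proof.
move=> TT; rewrite {1}/meshn; apply/bigmax_leP; split; first exact: bigmax_ge_id.
move=> i tT; apply: meshn_ge => //; exact: le_trans tT TT.
Qed.

Lemma meshn_small T e : 0 < T -> 0 < e -> \forall n \near \oo, meshn n T <= e.
Proof.
move=> T0 e0; apply: filterS (mesh_near hpi T0 e0) => n H.
rewrite /meshn; apply/bigmax_leP; split; first exact: ltW.
move=> i ti; exact: H.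
Qed.

Definition delta n := \big[Num.min/1]_(M < n.+1) Num.max (meshn n M%:R) (M.+1%:R)^-1.

Lemma delta_gt0 n : 0 < delta n.
Proof.
apply/bigmin_gtP; split => // M _; rewrite lt_max; apply/orP; right.
by rewrite invr_gt0 ltr0n.
Qed.

Lemma nat_bound (T : R) : exists M : nat, T <= M%:R.
Proof.
exists (Num.Def.archi_bound (Num.max T 0)).
apply: (@le_trans _ _ (Num.max T 0)); first by rewrite le_max lexx.
apply/ltW/archi_boundP; by rewrite le_max lexx orbT.
Qed.

Lemma delta_small e : 0 < e -> \forall n \near \oo, delta n <= e.
Proof.
move=> e0; have [M0 HM0] := nat_bound (e^-1).
have he : (M0.+1%:R)^-1 <= e.
  rewrite -[e]invrK lef_pV2 ?posrE ?invr_gt0 ?ltr0n //; apply: le_trans HM0 _.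
  by rewrite ler_nat.
have HN : \forall n \near \oo, (M0 <= n)%N by apply: exN_near; exists M0.
have T0M : 0 < (M0%:R + 1 : R) by have := ler0n R M0; lra.
have := meshn_small T0M e0.
move=> H; near=> n.
have Mn : (M0 < n.+1)%N by rewrite ltnS; near: n; exact: HN.
rewrite /delta; apply: le_trans (bigmin_le _ (Ordinal Mn) _) _ => /=.
rewrite ge_max he andbT; apply: le_trans (meshn_mono n (_ : M0%:R <= M0%:R + 1)) _.
  by rewrite lerDl.
near: n; exact: H.
Unshelve. all: by end_near.
Qed.

Lemma delta_mesh T : \forall n \near \oo, forall i, (i < k n)%N -> t n i <= T ->
  t n i.+1 - t n i <= delta n.
Proof.
have [M0 HM0] := nat_bound T.
have c0 : 0 < (M0.+2%:R : R)^-1 by rewrite invr_gt0 ltr0n.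
have T0M : 0 < (M0%:R + 1 : R) by have := ler0n R M0; lra.
have := meshn_small T0M c0.
move=> H; near=> n => i ik ti.
apply: le_trans (meshn_ge ik (le_trans ti HM0)) _.
have Hm : meshn n M0%:R <= (M0.+2%:R)^-1.
  apply: le_trans (meshn_mono n (_ : M0%:R <= M0%:R + 1)) _; first by rewrite lerDl.
  near: n; exact: H.
have m0 : 0 <= meshn n M0%:R by exact: bigmax_ge_id.
rewrite /delta; apply/bigmin_geP; split.
  apply: le_trans Hm _; rewrite invf_le1 ?ltr0n // ler1n //.
move=> M _; rewrite le_max; case: (leqP M0 M) => MM.
  by rewrite meshn_mono // ler_nat.
apply/orP; right; apply: le_trans Hm _.
rewrite lef_pV2 ?posrE ?ltr0n // ler_nat; apply: (leq_trans MM); exact: leq_trans (leqnSn _) (leqnSn _).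
Unshelve. all: by end_near.
Qed.

End Delta.
Section Knots.
Variables (R : realType) (m : nat) (t : nat -> nat -> R) (k : nat -> nat).
Hypothesis hpi : partition_seq t k.
Variable x : R -> 'cV[R]_m.
Hypothesis hx : cadlag x.

Definition smallk n j : bool :=
  [&& (0 < j)%N, (j < k n)%N & (t n j.+1 - t n j <= delta t k n)].
Definition adm n j (w : R) : Prop :=
  [/\ t n j < w, w <= t n j.+1, (w < t n j.+1) \/ smallk n j.+1, jx x w != 0 &
   forall w', t n j < w' -> w' <= t n j.+1 -> `|jx x w'| <= `|jx x w| + `|jx x w|].
Definition ak n j :=
  if smallk n j then xget ((t n j + t n j.+1) / 2) (adm n j) else t n j.

Lemma ak_spec n j : smallk n j ->
  [/\ t n j < ak n j, ak n j <= t n j.+1 & (ak n j < t n j.+1 \/ smallk n j.+1)].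
Proof.
move=> sm; have /and3P[_ jk _] := sm.
have ti := t_inc hpi jk.
rewrite /ak sm; case: (pselect (exists w, adm n j w)) => [ex|nex].
  by have [h1 h2 h3 _ _] := xgetPex ((t n j + t n j.+1) / 2) ex.
rewrite xgetPN; last by move=> w hw; apply: nex; exists w.
split; [lra | lra | left; lra].
Qed.

Lemma ak_nsmall n j : ~~ smallk n j -> ak n j = t n j.
Proof. by rewrite /ak => /negbTE ->. Qed.

Lemma t_le_ak n j : t n j <= ak n j.
Proof.
case: (boolP (smallk n j)) => [sm|nsm]; last by rewrite ak_nsmall.
by case: (ak_spec sm) => /ltW.
Qed.

Lemma ak0 n : ak n 0 = 0.
Proof. by rewrite ak_nsmall // (t0 hpi). Qed.

Lemma ak_strict n j : (j < k n)%N -> ak n j < ak n j.+1.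
Proof.
move=> jk; have ti := t_inc hpi jk.
case: (boolP (smallk n j)) => [sm|nsm]; last first.
  by rewrite ak_nsmall //; apply: lt_le_trans ti (t_le_ak _ _).
have [h1 h2 [h3|h3]] := ak_spec sm.
  exact: lt_le_trans h3 (t_le_ak _ _).
by apply: le_lt_trans h2 _; case: (ak_spec h3).
Qed.

Lemma ak_dev n j : `|ak n j - t n j| <= delta t k n.
Proof.
case: (boolP (smallk n j)) => [sm|nsm]; last first.
  by rewrite ak_nsmall // subrr normr0; apply/ltW/delta_gt0.
have [h1 h2 _] := ak_spec sm; have /and3P[_ _ h] := sm.
rewrite ger0_norm ?subr_ge0 ?(ltW h1) //; apply: le_trans h; lra.
Qed.

Definition Lam n := lamk (ak n) (t n) (k n).

Lemma Lam_tc n : time_change (Lam n).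
Proof. apply: lamk_tc; [exact: ak0 | exact: (t0 hpi) | exact: ak_strict | exact: (t_inc hpi)]. Qed.

Lemma Lam_knot n j : (j <= k n)%N -> Lam n (ak n j) = t n j.
Proof. move=> jk; apply: lamk_knot => //; [exact: (t0 hpi) | exact: ak_strict]. Qed.

Lemma Lam_dev e : 0 < e -> exists N : nat, forall n, (N <= n)%N ->
  forall s, 0 <= s -> `|Lam n s - s| <= e.
Proof.
move=> e0; apply: near_exN; apply: filterS (delta_small hpi e0) => n dn s s0.
apply: le_trans dn; apply: lamk_dev => //; [exact: ak0 | exact: (t0 hpi) | exact: ak_strict |].
move=> j _; exact: ak_dev.
Qed.


Lemma xjump (a b : 'I_m) u c : 0 < u -> 0 < c ->
  (\forall n \near \oo, exists j, [/\ (j < k n)%N, t n j < u, u <= t n j.+1 &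
     c <= `|dd t x a b n j|]) -> jx x u != 0.
Proof.
move=> u0 c0 H; apply/negP => /eqP J0.
set cc := Num.min 1 c.
have cc0 : 0 < cc by rewrite lt_min ltr01 c0.
have cc1 : cc <= 1 by rewrite ge_min lexx.
have ccc : cc <= c by rewrite ge_min lexx orbT.
pose eta := cc / 4.
have eta0 : 0 < eta by rewrite divr_gt0.
have etac : (eta + eta) * (eta + eta) < c by rewrite /eta; apply: lt_le_trans ccc; nra.
have [dx dx0 Hx] := intv hx u0 eta0.
have dx20 : 0 < dx / 2 by rewrite divr_gt0.
have HM := mesh_near hpi (ltr_wpDr ler01 u0) dx20.
have [n [[j [jk tj ju hc]] Hn]] := near_ex (filterI H HM).
have len := Hn j jk (ltW (lt_le_trans tj (ler_wpDr ler01 (lexx u)))).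
have a1 : `|u - t n j| < dx by rewrite gtr0_norm ?subr_gt0 //; lra.
have a2 : `|u - t n j.+1| < dx by rewrite ler0_norm ?subr_le0 //; lra.
have [_ _ h3] := Hx _ _ a1 a2.
have := h3 tj ju; rewrite J0 subr0 -/(Dx t x n j) => hD.
have h1 := le_trans hc (dd_le t x a b n j).
have h2 : `|Dx t x n j| * `|Dx t x n j| <= (eta + eta) * (eta + eta).
  by apply: ler_pM => //; exact: normr_ge0.
lra.
Qed.

Lemma desig u : 0 < u -> jx x u != 0 ->
  \forall n \near \oo, exists j, [/\ (j < k n)%N, t n j < u, u <= t n j.+1 & ak n j = u].
Proof.
move=> u0 J; set c := `|jx x u|.
have c0 : 0 < c by rewrite normr_gt0.
pose eta := c / 8.
have eta0 : 0 < eta by rewrite divr_gt0.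
have [dj dj0 Hj] := jsmall hx u0 eta0.
pose r := Num.min dj u / 2.
have r0 : 0 < r by rewrite divr_gt0 // lt_min dj0 u0.
have mdj : Num.min dj u <= dj by rewrite ge_min lexx.
have mu' : Num.min dj u <= u by rewrite ge_min lexx orbT.
have mpos : 0 < Num.min dj u by rewrite lt_min dj0 u0.
have rdj : r < dj by rewrite /r; lra.
have ru : r < u by rewrite /r; lra.
have u10 : 0 < u + 1 by lra.
have E1 := end_near hpi u.
have E2 := mesh_near hpi u10 r0.
have E3 := delta_mesh hpi (u + 1).
near=> n.
have Ek : u < t n (k n) by near: n; exact: E1.
have Em : forall i, (i < k n)%N -> t n i <= u + 1 -> t n i.+1 - t n i <= r.
  by near: n; exact: E2.
have Ed : forall i, (i < k n)%N -> t n i <= u + 1 -> t n i.+1 - t n i <= delta t k n.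
  by near: n; exact: E3.
have [j [jk tj ju]] := findj hpi u0 (ltW Ek).
have tju : t n j <= u + 1 by lra.
have lenr := Em j jk tju.
have lend := Ed j jk tju.
have j0 : (0 < j)%N.
  rewrite lt0n; apply/negP => /eqP j0; move: lenr; rewrite j0 (t0 hpi) subr0.
  by move: ju; rewrite j0; lra.
have smj : smallk n j by rewrite /smallk j0 jk lend.
have tj0 : 0 <= t n j by apply: (t_ge0 hpi); exact: ltnW.
have near_u : forall w, t n j < w -> w <= t n j.+1 -> w != u -> `|jx x w| <= eta + eta.
  move=> w h1 h2 wu; apply: Hj => //; last by lra.
  apply: le_lt_trans rdj; rewrite ler_norml; apply/andP; split; lra.
have admu : adm n j u.
  split => //.
  - case: (boolP (u < t n j.+1)) => [h|]; first by left.
    rewrite -leNgt => h; have eu : t n j.+1 = u by apply/le_anti; rewrite h ju.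
    right; have jk1 : (j.+1 < k n)%N.
      rewrite ltn_neqAle jk andbT; apply/negP => /eqP ek.
      by move: Ek; rewrite -ek eu ltxx.
    rewrite /smallk jk1 /=; apply: Ed => //; lra.
  - move=> w h1 h2; case: (eqVneq w u) => [->|wu].
      by rewrite -/c; lra.
    have := near_u w h1 h2 wu; rewrite -/c /eta; lra.
exists j; split => //.
rewrite /ak smj.
have ex : exists w, adm n j w by exists u.
have [h1 h2 _ _ h5] := xgetPex ((t n j + t n j.+1) / 2) ex.
set w := xget _ _ in h1 h2 h5 *.
apply/eqP; apply/negP => /negP wu.
have := near_u w h1 h2 wu; have := h5 u tj ju; rewrite -/c /eta; lra.
Unshelve. all: by end_near.
Qed.

Lemma Lam_align (a b : 'I_m) (g : R -> R) (hg : cadlag g) (mu : nat -> R -> R)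
  (hmu : forall n, time_change (mu n))
  (hmu1 : forall e : R, 0 < e -> exists N : nat, forall n, (N <= n)%N ->
        forall s, 0 <= s -> `|mu n s - s| <= e)
  (hmu2 : forall T : R, 0 < T -> forall e : R, 0 < e -> exists N : nat,
        forall n, (N <= n)%N -> forall s, 0 <= s -> s <= T ->
          `|qe t k x a b n (mu n s) - g s| <= e)
  u (u0 : 0 < u) (J : jmp g u != 0) :
  \forall n \near \oo, Lam n u = mu n u.
Proof.
have A := align_mu hpi hx hg hmu hmu1 hmu2 u0 J.
have c0 : 0 < `|jmp g u| / 4 by rewrite divr_gt0 // normr_gt0.
have Jx : jx x u != 0.
  apply: (@xjump a b u _ u0 c0); apply: filterS A => n [j [h1 h2 h3 h4 h5]].
  by exists j; split.
have D := desig u0 Jx.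
near=> n.
have [j1 [j1k E1 t1 u1 _]] : exists j, [/\ (j < k n)%N, mu n u = t n j, t n j < u,
     u <= t n j.+1 & `|jmp g u| / 4 <= `|dd t x a b n j|] by near: n; exact: A.
have [j2 [j2k t2 u2 E2]] : exists j, [/\ (j < k n)%N, t n j < u, u <= t n j.+1 & ak n j = u]
  by near: n; exact: D.
have ej := uniqj hpi j1k j2k t1 u1 t2 u2.
by rewrite -{1}E2 Lam_knot ?(ltnW j2k) // -ej E1.
Unshelve. all: by end_near.
Qed.

End Knots.
Unset Implicit Arguments.

Theorem proposition3p5 (R : realType) (m : nat) (t : nat -> nat -> R)
  (k : nat -> nat) (hpi : partition_seq t k)
  (x : R -> 'cV[R]_m) (hx : cadlag x) :
  D_convergent (qvar t k x) <->
  (forall i j : 'I_m, D_convergent (fun n s => qvar t k x n s i j)).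
Proof.
split; first exact: forward_dir.
move=> H.
pose P := (fun (ij : 'I_m * 'I_m) (p : (R -> R) * (nat -> R -> R)) =>
  [/\ cadlag p.1, (forall n, time_change (p.2 n)),
     (forall e : R, 0 < e -> exists N : nat, forall n, (N <= n)%N ->
        forall s, 0 <= s -> `|p.2 n s - s| <= e) &
     (forall T : R, 0 < T -> forall e : R, 0 < e -> exists N : nat,
        forall n, (N <= n)%N -> forall s, 0 <= s -> s <= T ->
          `|qe t k x ij.1 ij.2 n (p.2 n s) - p.1 s| <= e)]).
have HC : forall ij, exists p, P ij p.
  move=> [i j]; have [f [cf [lam [tl [l1 l2]]]]] := H i j.
  by exists (f, lam); split.
have [F HF] := choice HC.
pose f s := \matrix_(i, j) (F (i, j)).1 s.
have fE : forall i j, (fun s => f s i j) = (F (i, j)).1.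
  by move=> i j; apply/funext => s; rewrite mxE.
exists f; split.
  split.
    move=> t1 t10; apply: mx_cvg_entries => i j; rewrite fE mxE.
    by case: (HF (i, j)) => [[hr _] _ _ _]; exact: hr.
  move=> t1 t10; apply/cvg_ex.
  exists (\matrix_(i, j) lim ((F (i, j)).1 y @[y --> t1^'-])).
  apply: mx_cvg_entries => i j; rewrite fE mxE.
  by case: (HF (i, j)) => [[_ hl] _ _ _]; exact: hl.
exists (Lam t k x); split; first exact: Lam_tc.
split; first exact: Lam_dev.
move=> T T0 e e0; apply: near_exN.
have : \forall n \near \oo, forall ij : 'I_m * 'I_m, forall s, 0 <= s -> s <= T ->
   `|qe t k x ij.1 ij.2 n (Lam t k x n s) - (F ij).1 s| <= e.
  apply: filter_forall => -[i j].
  case: (HF (i, j)) => hg hmu hmu1 hmu2.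
  apply: exN_near; apply: (entry_lemma hg hmu hmu1 hmu2) => //.
  - exact: Lam_tc.
  - exact: Lam_dev.
  - move=> u u0 J; exact: (Lam_align hpi hx hg hmu hmu1 hmu2 u0 J).
apply: filterS => n Hn s s0 sT; apply: mx_norm_le; first exact: ltW.
move=> i j; rewrite !mxE; exact: (Hn (i, j) s s0 sT).
Qed.
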